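(* Let $W$ be an $\epsilon$-spectral cluster of $G_0$, let $V\subseteq V_0$ be closed in $G_0$ and dominate $W$, let $G=G_0|V$, and let $S\subseteq V$ be closed in $G$ with $\mathrm{vol}_{G_0}(W\setminus S)\le\frac23\mathrm{vol}_{G_0}(W)$. Perform the following ''big expansion'' of $S$ inside $G$: (1) a grab; (2) local improvements of $S$; (3) a grab; (4) local improvements of $S$. Here a grab replaces $S$ by $S\cup T$, where $T$ is the set of all $v\in V\setminus S$ with $d_G(v)>0$ having at least $\frac16 d_G(v)$ of their $G$-neighbors in $S$ (computed before the grab); local improvements of $S$ means: while there exists $v\in V\setminus S$ with $d_G(v)>0$ and at least $\frac59 d_G(v)$ of its $G$-neighbors in $S$, add $v$ to $S$. Then the resulting set $S$ dominates $W$.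
   Context: Standing setting: $G_0=(V_0,E_0)$ is a finite simple undirected graph and $0<\epsilon\le 1/2000000$. For a graph $H$, $d_H(v)$ is the degree, $\mathrm{vol}_H(S)=\sum_{v\in S}d_H(v)$, $E(S,T)$ is the set of edges with one endpoint in $S$ and the other in $T$, $\partial_H S=E(S,V(H)\setminus S)$. For $V\subseteq V_0$, $G_0|V$ is the induced subgraph. An $\epsilon$-spectral cluster of $G_0$ is $W\subseteq V_0$ with $\mathrm{vol}_{G_0}(W)>0$, $|\partial_{G_0}W|\le\epsilon\,\mathrm{vol}_{G_0}(W)$, and for every $A\subseteq W$ with $r=\mathrm{vol}_{G_0}(A)/\mathrm{vol}_{G_0}(W)$, $|E(A,W\setminus A)|\ge(r(1-r)-\epsilon)\mathrm{vol}_{G_0}(W)$. A set $A\subseteq V(H)$ is closed in $H$ if no $v\in V(H)\setminus A$ with $d_H(v)>0$ has at least $\frac59 d_H(v)$ of its $H$-neighbors in $A$. A set $A\subseteq V_0$ dominates $W$ if $\mathrm{vol}_{G_0}(W\cap A)>(1-3\epsilon)\mathrm{vol}_{G_0}(W)$. *)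

(* Defs.v *)
(* A finite simple graph G0 = (V0,E0) is a finType T (= V0)
   with a symmetric irreflexive relation e : rel T. *)
From HB Require Import structures.
From mathcomp Require Import all_boot all_order all_algebra.
Set Implicit Arguments. Unset Strict Implicit. Unset Printing Implicit Defensive.
Import Order.TTheory GRing.Theory Num.Theory.

Section Graph.
Variables (T : finType) (e : rel T).

(* degree of v in the induced subgraph G0|V *)
Definition deg (V : {set T}) (v : T) : nat := #|[set u in V | e v u]|.

Definition nbrs_in (V A : {set T}) (v : T) : nat :=
  #|[set u in V | e v u && (u \in A)]|.

Definition vol (A : {set T}) : nat := \sum_(v in A) deg setT v.

Definition edges_between (S T' : {set T}) : {set {set T}} :=
  [set [set p.1; p.2] | p in [set p : T * T | [&& e p.1 p.2, p.1 \in S & p.2 \in T']]].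

Definition closed_in (V A : {set T}) : Prop :=
  forall v, v \in V -> v \notin A -> 0 < deg V v ->
    ~ (5 * deg V v <= 9 * nbrs_in V A v).

Definition grab (V S : {set T}) : {set T} :=
  S :|: [set v in V | [&& v \notin S, 0 < deg V v & deg V v <= 6 * nbrs_in V S v]].

(* local_improvements V S S' : S' is a possible outcome of the process
   "while there is v in V \ S with d_G(v) > 0 and >= 5/9 d_G(v) neighbours in S,
    add v to S" run inside G = G0|V starting from S. *)
Inductive local_improvements (V : {set T}) : {set T} -> {set T} -> Prop :=
  | li_stop (S : {set T}) : closed_in V S -> local_improvements V S S
  | li_step (S S' : {set T}) (v : T) : v \in V -> v \notin S -> 0 < deg V v ->
      5 * deg V v <= 9 * nbrs_in V S v ->
      local_improvements V (v |: S) S' -> local_improvements V S S'.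

Section Real.
Local Open Scope ring_scope.
Variables (R : realFieldType) (eps : R).

Definition spectral_cluster (W : {set T}) : Prop :=
  (0 < vol W)%N /\
  (#|edges_between W (~: W)|%:R <= eps * (vol W)%:R) /\
  (forall A : {set T}, A \subset W ->
     let r := (vol A)%:R / (vol W)%:R in
     (r * (1 - r) - eps) * (vol W)%:R <= #|edges_between A (W :\: A)|%:R).

Definition dominates (A W : {set T}) : Prop :=
  (1 - 3 * eps) * (vol W)%:R < (vol (W :&: A))%:R.
End Real.
End Graph.

(* Main.v *)
Require Import Defs.
From HB Require Import structures.
From mathcomp Require Import all_boot all_order all_algebra.
From mathcomp Require Import ring lra zify.
Import Order.TTheory GRing.Theory Num.Theory.
Set Implicit Arguments. Unset Strict Implicit.

Definition Nb (T : finType) (e : rel T) (B : {set T}) (v : T) : nat :=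
  #|[set u | e v u && (u \in B)]|.

Lemma edges_le (T : finType) (e : rel T) (A B : {set T}) :
  #|edges_between e A B| <= \sum_(v in A) Nb e B v.
Proof.
rewrite /edges_between; apply: leq_trans (leq_imset_card _ _) _.
rewrite -sum1_card /Nb.
under [X in _ <= X]eq_bigr => v _ do rewrite -sum1_card.
rewrite pair_big_dep /=; apply: eq_leq; apply: eq_bigl => -[a b] /=.
by rewrite !inE; case: (a \in A); case: (e a b); case: (b \in B).
Qed.

Lemma vol_split (T : finType) (e : rel T) (A C : {set T}) :
  vol e A = vol e (A :&: C) + vol e (A :\: C).
Proof. by rewrite /vol (big_setID C). Qed.

Lemma vol_mono (T : finType) (e : rel T) (A B : {set T}) :
  A \subset B -> vol e A <= vol e B.
Proof.
move=> sAB; rewrite (vol_split e B A).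
by rewrite (setIidPr sAB) leq_addr.
Qed.

Lemma Nb_mono (T : finType) (e : rel T) (B C : {set T}) v :
  B \subset C -> Nb e B v <= Nb e C v.
Proof.
move=> sBC; apply: subset_leq_card; apply/subsetP => u; rewrite !inE.
by case/andP => -> /(subsetP sBC).
Qed.

Lemma deg_mono (T : finType) (e : rel T) (V : {set T}) v : deg e V v <= deg e setT v.
Proof. by apply: subset_leq_card; apply/subsetP => u; rewrite !inE; case/andP. Qed.

Lemma Nb_nbrs (T : finType) (e : rel T) (V C : {set T}) v :
  C \subset V -> Nb e C v = nbrs_in e V C v.
Proof.
move=> sCV; rewrite /Nb /nbrs_in; apply: eq_card => u; rewrite !inE.
case uC: (u \in C); last by rewrite !andbF.
by rewrite (subsetP sCV _ uC) !andbT.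
Qed.

Lemma nbrs_deg (T : finType) (e : rel T) (V C : {set T}) v :
  nbrs_in e V C v <= deg e V v.
Proof.
by apply: subset_leq_card; apply/subsetP => u; rewrite !inE; case/andP=> -> /andP[->].
Qed.

Lemma nb_closed_gen (T : finType) (e : rel T) (V C : {set T}) v :
  closed_in e V C -> C \subset V -> v \in V -> v \notin C ->
  9 * Nb e C v <= 5 * deg e setT v.
Proof.
move=> hC sCV vV vC; rewrite (Nb_nbrs _ _ sCV).
have hd := deg_mono e V v.
case: (posnP (deg e V v)) => d0.
  have := nbrs_deg e V C v; rewrite d0 leqn0 => /eqP ->; by rewrite muln0.
have := hC v vV vC d0; move/negP; rewrite -ltnNge => h.
apply: leq_trans (ltnW h) _; by rewrite leq_mul2l.
Qed.

Lemma nb_closed (T : finType) (e : rel T) (V C : {set T}) v :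
  closed_in e setT V -> closed_in e V C -> C \subset V -> v \notin C ->
  9 * Nb e C v <= 5 * deg e setT v.
Proof.
move=> hV hC sCV vC; case vV: (v \in V).
  exact: nb_closed_gen hC sCV vV vC.
apply: leq_trans (nb_closed_gen hV (subsetT V) (in_setT v) (negbT vV)).
by rewrite leq_mul2l Nb_mono.
Qed.

Lemma nb_grab (T : finType) (e : rel T) (V S : {set T}) v :
  S \subset V -> v \in V -> v \notin grab e V S -> 6 * Nb e S v <= deg e setT v.
Proof.
move=> sSV vV; rewrite /grab !inE negb_or => /andP[vS].
rewrite vV vS /= negb_and (Nb_nbrs _ _ sSV).
have hd := deg_mono e V v.
case: (posnP (deg e V v)) => d0.
  have := nbrs_deg e V S v; rewrite d0 leqn0 => /eqP ->; by rewrite muln0.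
rewrite /=.
rewrite -ltnNge => h; exact: leq_trans (ltnW h) hd.
Qed.

Lemma grab_sub (T : finType) (e : rel T) (V S : {set T}) : S \subset grab e V S.
Proof. exact: subsetUl. Qed.

Lemma grab_V (T : finType) (e : rel T) (V S : {set T}) :
  S \subset V -> grab e V S \subset V.
Proof.
move=> sSV; rewrite subUset sSV /=; apply/subsetP => u; by rewrite inE => /andP[].
Qed.

Lemma li_props (T : finType) (e : rel T) (V A B : {set T}) :
  local_improvements e V A B ->
  [/\ A \subset B, closed_in e V B & (A \subset V -> B \subset V)].
Proof.
elim => [S hS | S S' v vV vS d0 hv _ [IH1 IH2 IH3]]; first by split.
split => //.
  exact: subset_trans (subsetUr _ _) IH1.
move=> sSV; apply: IH3; by rewrite subUset sub1set vV.
Qed.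
Local Open Scope ring_scope.
Lemma mulw_bound (R : realFieldType) (eps w x E : R) : 0 < w ->
  (x / w * (1 - x / w) - eps) * w <= E -> x * w - x ^+ 2 - eps * w ^+ 2 <= E * w.
Proof.
move=> w0 h.
have -> : x * w - x ^+ 2 - eps * w ^+ 2 = (x / w * (1 - x / w) - eps) * w * w.
  by field; rewrite gt_eqF.
by rewrite ler_pM2r.
Qed.

Lemma real_core (R : realFieldType) (eps w x z y u a f E0 E1 : R) :
  0 < w -> 0 < eps -> eps <= 1 / 2000000%:R -> 0 <= z -> 0 <= y -> 0 <= u -> 0 <= f ->
  3 * x <= 2 * w -> x = z + y ->
  (x / w * (1 - x / w) - eps) * w <= E0 -> 18 * E0 <= 10 * z + 3 * y + 7 * u ->
  w = a + u -> (1 - 3 * eps) * w < a -> f <= y ->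
  (f / w * (1 - f / w) - eps) * w <= E1 -> 9 * E1 <= 5 * f -> f < 3 * eps * w.
Proof.
move=> w0 e0 e1 z0 y0 u0 f0 hx hxz hE0 hs0 hw ha hfy hE1 hs1.
have h0 := mulw_bound w0 hE0.
have h1 := mulw_bound w0 hE1.
have hu : u < 3 * eps * w by lra.
have hx2 : (x - 2/3 * w) * (18 * x + 4 * w) <= 0.
  apply: mulr_le0_ge0; lra.
have huw : u * w <= 3 * eps * w * w by rewrite ler_pM2r // ltW.
have hew : eps * w * w <= 1 / 2000000%:R * w * w by rewrite ler_pM2r // ler_pM2r.
have hyw : y * w <= 2/5 * w * w.
  have h18 : 18 * E0 * w <= (10 * z + 3 * y + 7 * u) * w by rewrite ler_pM2r.
  nra.
have hy : y <= 2/5 * w by move: hyw; rewrite ler_pM2r.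
rewrite ltNge; apply/negP => hf.
have hp : 0 <= (f - 3 * eps * w) * (2/5 * w - f) by apply: mulr_ge0; lra.
have h9 : 9 * E1 * w <= 5 * f * w by rewrite ler_pM2r.
have hfw : 0 <= f * w by apply: mulr_ge0; lra.
have hefw : eps * (w * f) <= 1 / 2000000%:R * (w * f).
  by apply: ler_wpM2r => //; rewrite mulrC.
have hew2 : 0 < eps * w * w by rewrite !mulr_gt0.
nra.
Qed.
Local Close Scope ring_scope.

Theorem mainTheorem9 (R : realFieldType) (eps : R) (T : finType) (e : rel T)
  (e_sym : symmetric e) (e_irr : irreflexive e)
  (eps_pos : (0 < eps)%R) (eps_small : (eps <= 1 / 2000000%:R)%R)
  (W V S : {set T})
  (hW : spectral_cluster e eps W)
  (hVclosed : closed_in e setT V)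
  (hVdom : dominates e eps V W)
  (hSV : S \subset V)
  (hSclosed : closed_in e V S)
  (hSvol : 3 * vol e (W :\: S) <= 2 * vol e W)
  (S1 S2 S3 S4 : {set T})
  (h1 : S1 = grab e V S)
  (h2 : local_improvements e V S1 S2)
  (h3 : S3 = grab e V S2)
  (h4 : local_improvements e V S3 S4) :
  dominates e eps S4 W.
Proof.
case: hW => w0 [_ hcut].
have sSS1 : S \subset S1 by rewrite h1 grab_sub.
have sS1V : S1 \subset V by rewrite h1 grab_V.
have [sS1S2 _ vS2] := li_props h2.
have sS2V := vS2 sS1V.
have sS2S3 : S2 \subset S3 by rewrite h3 grab_sub.
have sS3V : S3 \subset V by rewrite h3 grab_V.
have [sS3S4 cS4 vS4] := li_props h4.
have sS4V := vS4 sS3V.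
have sS1S4 : S1 \subset S4.
  exact: subset_trans sS1S2 (subset_trans sS2S3 sS3S4).
set X := W :\: S. set Y := X :\: S1. set F := W :\: S4.
have hE0 := hcut X (subsetDl W S). rewrite /= in hE0.
have hE1 := hcut F (subsetDl W S4). rewrite /= in hE1.
have hN0 : #|edges_between e X (W :\: X)| <= \sum_(v in X) Nb e S v.
  apply: leq_trans (edges_le _ _ _) _; apply: leq_sum => v _; apply: Nb_mono.
  apply/subsetP => u; rewrite !inE => /andP[h hw]; move: h; by rewrite hw andbT negbK.
have hN1 : #|edges_between e F (W :\: F)| <= \sum_(v in F) Nb e S4 v.
  apply: leq_trans (edges_le _ _ _) _; apply: leq_sum => v _; apply: Nb_mono.
  apply/subsetP => u; rewrite !inE => /andP[h hw]; move: h; by rewrite hw andbT negbK.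
have hs0 : 18 * \sum_(v in X) Nb e S v <=
    10 * vol e (X :&: S1) + 3 * vol e Y + 7 * vol e (W :\: V).
  rewrite (big_setID S1) /= mulnDr.
  have A1 : 18 * \sum_(v in X :&: S1) Nb e S v <= 10 * vol e (X :&: S1).
    rewrite /vol !big_distrr leq_sum // => v /setIP[/setDP[_ vS] _].
    have := nb_closed hVclosed hSclosed hSV vS => h.
    by move: (leq_mul (leqnn 2) h); rewrite !mulnA.
  have -> : \sum_(v in Y) Nb e S v =
     \sum_(v in Y :&: V) Nb e S v + \sum_(v in Y :\: V) Nb e S v by rewrite (big_setID V).
  rewrite mulnDr.
  have B1 : 18 * \sum_(v in Y :&: V) Nb e S v <= 3 * vol e (Y :&: V).
    rewrite /vol !big_distrr leq_sum // => v /setIP[/setDP[_ vS1] vV].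
    have vG : v \notin grab e V S by rewrite -h1.
    have := nb_grab hSV vV vG => h.
    by move: (leq_mul (leqnn 3) h); rewrite !mulnA.
  have B2 : 18 * \sum_(v in Y :\: V) Nb e S v <= 10 * vol e (Y :\: V).
    rewrite /vol !big_distrr leq_sum // => v /setDP[/setDP[/setDP[_ vS] _] _].
    have := nb_closed hVclosed hSclosed hSV vS => h.
    by move: (leq_mul (leqnn 2) h); rewrite !mulnA.
  have hY := vol_split e Y V.
  have hYV : vol e (Y :\: V) <= vol e (W :\: V).
    apply: vol_mono; apply/subsetP => v /setDP[/setDP[/setDP[vW _] _] vV].
    by apply/setDP.
  move: A1 B1 B2 hY hYV; clear.
  set a1 := \sum_(i in X :&: S1) _. set b1 := \sum_(i in Y :&: V) _. set b2 := \sum_(i in Y :\: V) _.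
  lia.
have hs1 : 9 * \sum_(v in F) Nb e S4 v <= 5 * vol e F.
  rewrite /vol !big_distrr leq_sum // => v /setDP[_ vn].
  exact: nb_closed hVclosed cS4 sS4V vn.
have hfy : vol e F <= vol e Y.
  apply: vol_mono; apply/subsetP => v /setDP[vW vn].
  have vS1 : v \notin S1 by apply/negP => /(subsetP sS1S4); rewrite (negbTE vn).
  have vS : v \notin S by apply/negP => /(subsetP sSS1); rewrite (negbTE vS1).
  by apply/setDP; split => //; apply/setDP.
have hx := vol_split e X S1.
have hwV := vol_split e W V.
have hwF := vol_split e W S4.
have hs0' : 18 * #|edges_between e X (W :\: X)| <=
    10 * vol e (X :&: S1) + 3 * vol e Y + 7 * vol e (W :\: V).
  apply: leq_trans hs0; by rewrite leq_mul2l hN0 orbT.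
have hs1' : 9 * #|edges_between e F (W :\: F)| <= 5 * vol e F.
  apply: leq_trans hs1; by rewrite leq_mul2l hN1 orbT.
rewrite /dominates.
have w0R : (0 < (vol e W)%:R :> R)%R by rewrite ltr0n.
have hf : ((vol e F)%:R < 3 * eps * (vol e W)%:R :> R)%R.
  apply: (real_core (x := (vol e X)%:R) (z := (vol e (X :&: S1))%:R) (y := (vol e Y)%:R)
    (u := (vol e (W :\: V))%:R) (a := (vol e (W :&: V))%:R)
    (E0 := (#|edges_between e X (W :\: X)|)%:R) (E1 := (#|edges_between e F (W :\: F)|)%:R))
    => //.
  all: try exact: ler0n.
  - by rewrite -!natrM ler_nat.
  - by rewrite hx natrD.
  - by rewrite -!natrM -!natrD ler_nat.
  - by rewrite hwV natrD.
  - by rewrite ler_nat.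
  - by rewrite -!natrM ler_nat.
rewrite /dominates.
have -> : ((vol e W)%:R = (vol e (W :&: S4))%:R + (vol e F)%:R :> R)%R by rewrite hwF natrD.
move: hf; rewrite hwF natrD => hf.
lra.
Qed.
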